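(* Let $k > 0$, let $\mathcal{J} \subseteq \{1,\dots,n\}$, and let ${\mathbf{x}}^* = k\sum_{j\in\mathcal{J}} {\mathbf{e}}_j$. Suppose there is a vector ${\mathbf{c}}$ with $$\frac{P {\mathbf{e}}_j}{\| P {\mathbf{e}}_j \|_2} \cdot {\mathbf{c}} = 1 \ \ \forall j \in \mathcal{J}, \qquad \frac{P {\mathbf{e}}_i}{\| P {\mathbf{e}}_i \|_2} \cdot {\mathbf{c}} < 1 \ \ \forall i \in \mathcal{J}^c.$$ Then ${\mathbf{x}}^*$ is the unique solution of $$\min_{0 \leq {\mathbf{x}} \leq k} \| W {\mathbf{x}} \|_1 \quad \text{subject to} \quad A {\mathbf{x}} = A {\mathbf{x}}^*.$$
   Context: $A \in \mathbb{R}^{m\times n}$ is a matrix, $A^\dagger$ its Moore–Penrose pseudoinverse, and $P = A^\dagger A$ the orthogonal projection onto $\mathcal{N}(A)^\perp$. ${\mathbf{e}}_1,\dots,{\mathbf{e}}_n$ are the standard unit vectors, assumed not to lie in $\mathcal{N}(A)$, so $w_i := \|P{\mathbf{e}}_i\|_2 > 0$; $W = \mathrm{diag}(w_1,\dots,w_n)$. Inequalities $0\le{\mathbf{x}}\le k$ are componentwise. *)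

(* Defs.v *)
From HB Require Import structures.
From mathcomp Require Import all_boot all_order all_algebra.
Set Implicit Arguments. Unset Strict Implicit. Unset Printing Implicit Defensive.
Import Order.TTheory GRing.Theory Num.Theory.
Local Open Scope ring_scope.

(* The Moore-Penrose pseudoinverse X of A, characterized by the four
   Penrose equations (which determine it uniquely). *)
Definition is_pinv (R : rcfType) (m n : nat) (A : 'M[R]_(m, n)) (X : 'M[R]_(n, m)) : Prop :=
  [/\ A *m X *m A = A, X *m A *m X = X, (A *m X)^T = A *m X & (X *m A)^T = X *m A].

Definition evec (R : rcfType) (n : nat) (j : 'I_n) : 'cV[R]_n := delta_mx j 0.

Definition dotv (R : rcfType) (n : nat) (u v : 'cV[R]_n) : R := \sum_i u i 0 * v i 0.
Definition norm2 (R : rcfType) (n : nat) (v : 'cV[R]_n) : R := Num.sqrt (dotv v v).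
Definition norm1 (R : rcfType) (n : nat) (v : 'cV[R]_n) : R := \sum_i `|v i 0|.

Definition Wmat (R : rcfType) (n : nat) (P : 'M[R]_n) : 'M[R]_n :=
  diag_mx (\row_i norm2 (P *m evec R i)).

Definition unique_minimizer (T : Type) (R : rcfType) (feasible : T -> Prop) (f : T -> R) (x0 : T) : Prop :=
  feasible x0 /\ (forall x, feasible x -> f x0 <= f x) /\
  (forall x, feasible x -> f x <= f x0 -> x = x0).

(* Main.v *)
Require Import Defs.
From HB Require Import structures.
From mathcomp Require Import all_boot all_order all_algebra.
Import Order.TTheory GRing.Theory Num.Theory.
Local Open Scope ring_scope.

Lemma evecE (R : rcfType) (p n : nat) (M : 'M[R]_(p, n)) (i : 'I_n) r :
  (M *m evec R i) r 0 = M r i.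
Proof.
rewrite /evec mxE (bigD1 i) //= mxE !eqxx mulr1 big1 ?addr0 // => j /negbTE ne.
by rewrite mxE ne mulr0.
Qed.

Lemma norm2_gt0 (R : rcfType) (n : nat) (v : 'cV[R]_n) : v != 0 -> 0 < norm2 v.
Proof.
move=> nz; rewrite /norm2 sqrtr_gt0 lt_def.
have ge0 : 0 <= dotv v v by rewrite /dotv sumr_ge0 // => i _; rewrite -expr2 sqr_ge0.
rewrite ge0 andbT; apply/eqP => h; move/eqP: nz; apply; apply/matrixP => i j.
rewrite (ord1 j) mxE.
have hr : forall r : 'I_n, predT r -> 0 <= v r 0 * v r 0 by move=> r _; rewrite -expr2 sqr_ge0.
have H := psumr_eq0P hr h.
by have := H i isT; move/eqP; rewrite mulf_eq0 orbb => /eqP.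
Qed.

Theorem corollary3 (R : rcfType) (m n : nat) (A : 'M[R]_(m, n)) (Adag : 'M[R]_(n, m))
  (hAdag : is_pinv A Adag)
  (he : forall i : 'I_n, A *m evec R i != 0)
  (k : R) (hk : 0 < k) (J : {set 'I_n}) (c : 'cV[R]_n)
  (hJ : forall j, j \in J ->
     dotv ((norm2 (Adag *m A *m evec R j))^-1 *: (Adag *m A *m evec R j)) c = 1)
  (hJc : forall i, i \notin J ->
     dotv ((norm2 (Adag *m A *m evec R i))^-1 *: (Adag *m A *m evec R i)) c < 1) :
  let P := Adag *m A in
  let xstar : 'cV[R]_n := k *: \sum_(j in J) evec R j in
  unique_minimizer
    (fun x : 'cV[R]_n => (forall i, 0 <= x i 0 <= k) /\ A *m x = A *m xstar)
    (fun x => norm1 (Wmat P *m x)) xstar.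
Proof.
move=> P xstar.
case: hAdag => hA1 _ _ _.
set w := fun i => norm2 (P *m evec R i).
have wpos : forall i, 0 < w i.
  move=> i; apply: norm2_gt0; apply/eqP => h; move/eqP: (he i); apply.
  by rewrite -hA1 -!mulmxA [Adag *m _]mulmxA -/P h mulmx0.
set s := fun i => \sum_r P r i * c r 0.
have hs : forall i, dotv ((w i)^-1 *: (P *m evec R i)) c = (w i)^-1 * s i.
  move=> i; rewrite /dotv mulr_sumr; apply: eq_bigr => r _.
  by rewrite mxE evecE mulrA.
have sJ : forall j, j \in J -> s j = w j.
  move=> j jJ; have := hJ j jJ; rewrite -/P -/(w j) hs => h.
  have := wpos j => wp; apply: (mulfI (invr_neq0 (lt0r_neq0 wp))).
  by rewrite h mulVf // lt0r_neq0.
have sJc : forall i, i \notin J -> s i < w i.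
  move=> i iJ; have := hJc i iJ; rewrite -/P -/(w i) hs => h.
  have wp := wpos i.
  have -> : s i = w i * ((w i)^-1 * s i) by rewrite mulrA mulfV ?mul1r // lt0r_neq0.
  by rewrite -[X in _ < X](mulr1 (w i)) ltr_pM2l.
have xsE : forall i, xstar i 0 = k * (i \in J)%:R.
  move=> i; rewrite /xstar mxE summxE; congr (_ * _).
  rewrite (eq_bigr (fun j => ((i == j))%:R)); last by move=> j _; rewrite mxE andbT.
  case: (boolP (i \in J)) => iJ.
    rewrite (bigD1 i) //= eqxx big1 ?addr0 // => j /andP[_ /negbTE ne].
    by rewrite eq_sym ne.
  by rewrite big1 // => j jJ; case: eqP => // ei; rewrite ei jJ in iJ.
have fE : forall x : 'cV[R]_n, (forall i, 0 <= x i 0) ->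
    norm1 (Wmat P *m x) = \sum_i w i * x i 0.
  move=> x xge; rewrite /norm1 /Wmat mul_diag_mx; apply: eq_bigr => i _.
  by rewrite !mxE ger0_norm // mulr_ge0 // ltW // wpos.
have xsge : forall i, 0 <= xstar i 0 <= k.
  by move=> i; rewrite xsE; case: (i \in J); rewrite ?mulr1 ?mulr0 ?lexx ltW.
have key : forall x : 'cV[R]_n, A *m x = A *m xstar ->
    \sum_i s i * (x i 0 - xstar i 0) = 0.
  move=> x hx.
  have Pd : P *m (x - xstar) = 0 by rewrite /P -mulmxA mulmxBr hx subrr mulmx0.
  transitivity (\sum_r c r 0 * (P *m (x - xstar)) r 0); last first.
    by rewrite Pd big1 // => r _; rewrite mxE mulr0.
  rewrite /s.
  under eq_bigr do rewrite mulr_suml.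
  rewrite exchange_big; apply: eq_bigr => r _.
  rewrite mxE mulr_sumr; apply: eq_bigr => i _.
  by rewrite -mulrA mulrCA; congr (_ * (_ * _)); rewrite !mxE.
have diffE : forall x : 'cV[R]_n, (forall i, 0 <= x i 0 <= k) -> A *m x = A *m xstar ->
    norm1 (Wmat P *m x) - norm1 (Wmat P *m xstar) =
    \sum_i (w i - s i) * (x i 0 - xstar i 0).
  move=> x xb hx.
  rewrite fE; last by move=> i; case/andP: (xb i).
  rewrite fE; last by move=> i; case/andP: (xsge i).
  rewrite -sumrB.
  transitivity (\sum_i w i * (x i 0 - xstar i 0) - \sum_i s i * (x i 0 - xstar i 0)).
    by rewrite key // subr0; apply: eq_bigr => i _; rewrite mulrBr.
  by rewrite -sumrB; apply: eq_bigr => i _; rewrite mulrBl.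
have termge : forall x : 'cV[R]_n, (forall i, 0 <= x i 0 <= k) ->
    forall i, 0 <= (w i - s i) * (x i 0 - xstar i 0).
  move=> x xb i; case: (boolP (i \in J)) => iJ.
    by rewrite sJ // subrr mul0r.
  rewrite xsE (negbTE iJ) mulr0 subr0 mulr_ge0 //.
    by rewrite subr_ge0 ltW // sJc.
  by case/andP: (xb i).
split; first by split.
split.
  move=> x [xb hx]; rewrite -subr_ge0 diffE //.
  by apply: sumr_ge0 => i _; apply: termge.
move=> x [xb hx] hle.
have h0 : \sum_i (w i - s i) * (x i 0 - xstar i 0) = 0.
  apply/eqP; rewrite eq_le; apply/andP; split.
    by rewrite -diffE // subr_le0.
  by apply: sumr_ge0 => i _; apply: termge.
have z := psumr_eq0P (P := predT) (fun i _ => termge x xb i) h0.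
have xJc : forall i, i \notin J -> x i 0 = 0.
  move=> i iJ; have := z i isT; rewrite xsE (negbTE iJ) mulr0 subr0.
  move/eqP; rewrite mulf_eq0 subr_eq0 => /orP[/eqP e|/eqP //].
  by have := sJc i iJ; rewrite e ltxx.
have hw : \sum_i w i * (x i 0 - xstar i 0) = 0.
  have -> : \sum_i w i * (x i 0 - xstar i 0) =
     \sum_i (w i - s i) * (x i 0 - xstar i 0) + \sum_i s i * (x i 0 - xstar i 0).
    by rewrite -big_split; apply: eq_bigr => i _; rewrite /= -mulrDl subrK.
  by rewrite h0 key // addr0.
have hw' : \sum_i w i * (xstar i 0 - x i 0) = 0.
  have -> : \sum_i w i * (xstar i 0 - x i 0) = - \sum_i w i * (x i 0 - xstar i 0).
    by rewrite -sumrN; apply: eq_bigr => i _; rewrite -mulrN opprB.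
  by rewrite hw oppr0.
have tge : forall i, 0 <= w i * (xstar i 0 - x i 0).
  move=> i; apply: mulr_ge0; first exact: ltW (wpos i).
  rewrite subr_ge0 xsE.
  case: (boolP (i \in J)) => iJ; last by rewrite xJc // mulr0.
  by rewrite mulr1; case/andP: (xb i).
have z2 := psumr_eq0P (P := predT) (fun i _ => tge i) hw'.
apply/matrixP => i j; rewrite (ord1 j).
have := z2 i isT; move/eqP; rewrite mulf_eq0 (negbTE (lt0r_neq0 (wpos i))) /= subr_eq0.
by move/eqP.
Qed.
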